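(* Under the hypotheses of the arrival-bound lemma (all $\lambda_j>0$, $\min_j\lambda_j\Gamma\ge e^{2e}$, $|\sum_{i=1}^kU^j_i-\lambda_j^{-1}k|\le\Gamma\phi(k)$ for all $k\ge1$, $j$), let $P\in\{0,1\}^{J\times J}$ have row sums in $\{0,1\}$ and $P^N=0$ for some $N$, and set $\bar\lambda=(I-P^T)^{-1}\lambda$, $\bar A(t)=(I-P^T)^{-1}A(t)$. Then for every $t\ge\max_j\big(\lambda_j^{-1}e^e,\lambda_j^{-1}+3\lambda_j^{-1}\lambda_{\max}^2\Gamma^2\big)$ and every $j$, $$\phi(\bar A_j(t))\le\big(2+6\lambda_{\max}^2\Gamma^2\big)^{1/2}\phi(\bar\lambda_jt).$$
   Context: $\phi(x)=\sqrt{x\ln\ln x}$ for $x\ge e^e$, $\phi(x)=1$ otherwise. $A_j(t)=\max\{k\ge0:\sum_{i=1}^kU^j_i\le t\}$, $A(t)=(A_j(t))_j$, $\lambda=(\lambda_j)_j$, $\lambda_{\max}=\max_j\lambda_j$. *)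

(* Defs.v *)
From Stdlib Require Import Reals.
Open Scope R_scope.

Definition phi (x : R) : R :=
  if Rle_dec (exp (exp 1)) x then sqrt (x * ln (ln x)) else 1.

Fixpoint sum_to (n : nat) (f : nat -> R) : R :=
  match n with
  | O => 0
  | S m => sum_to m f + f m
  end.

(* Partial sums  sum_{i=1}^k U_i  of a sequence indexed from 1 *)
Definition psum (U : nat -> R) (k : nat) : R := sum_to k (fun i => U (S i)).

Definition is_arrival_count (U : nat -> R) (t : R) (k : nat) : Prop :=
  psum U k <= t /\ (forall k' : nat, psum U k' <= t -> (k' <= k)%nat).

(* J x J matrices over indices 0..J-1, represented as functions *)
Definition ident (i k : nat) : R := if Nat.eqb i k then 1 else 0.
Definition matmul (J : nat) (A B : nat -> nat -> R) (i k : nat) : R :=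
  sum_to J (fun l => A i l * B l k).
Fixpoint matpow (J : nat) (P : nat -> nat -> R) (n : nat) : nat -> nat -> R :=
  match n with
  | O => ident
  | S m => matmul J (matpow J P m) P
  end.

Definition I_minus_PT (J : nat) (P : nat -> nat -> R) (x : nat -> R) (j : nat) : R :=
  x j - sum_to J (fun k => P k j * x k).

Fixpoint max_to (n : nat) (l : nat -> R) : R :=
  match n with
  | O => 0
  | S m => Rmax (max_to m l) (l m)
  end.

(* Main.v *)
Require Import Defs.
From Stdlib Require Import Reals Lra Lia Psatz.
Open Scope R_scope.

Lemma ln_le' x y : 0 < x -> x <= y -> ln x <= ln y.
Proof. intros Hx Hxy. destruct (Rle_lt_or_eq_dec _ _ Hxy) as [H|H].
 - left; apply ln_increasing; auto. - subst; lra. Qed.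

Lemma ln_bound u : 0 < u -> ln u <= u - 1.
Proof. intros Hu. pose proof (exp_ineq1_le (ln u)). rewrite exp_ln in H; lra. Qed.

Lemma e_gt2 : 2 < exp 1.
Proof. pose proof (exp_ineq1 1). lra. Qed.

Lemma lnln_ge1 x : exp (exp 1) <= x -> 1 <= ln (ln x).
Proof. intros H. pose proof (exp_pos (exp 1)).
 assert (H1: exp 1 <= ln x) by (rewrite <- (ln_exp (exp 1)); apply ln_le'; lra).
 pose proof e_gt2.
 assert (H3: ln (exp 1) <= ln (ln x)) by (apply ln_le'; lra).
 rewrite ln_exp in H3; lra. Qed.

Lemma ln_exp_ge x : exp (exp 1) <= x -> exp 1 <= ln x.
Proof. intros H. pose proof (exp_pos (exp 1)).
 rewrite <- (ln_exp (exp 1)); apply ln_le'; lra. Qed.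

Lemma phi_ge1 x : 1 <= phi x.
Proof. unfold phi. destruct (Rle_dec (exp (exp 1)) x) as [H|H]; [|lra].
 rewrite <- sqrt_1. apply sqrt_le_1_alt.
 pose proof (lnln_ge1 x H). pose proof e_gt2.
 pose proof (exp_ineq1 (exp 1)). nra. Qed.

Lemma node_bound (lam Gam C t a psA : R) (hlam: 0<lam)
  (hD: exp(2*exp 1) <= lam*Gam) (hC: (lam*Gam)^2 <= C) (ha: 0 <= a)
  (hpsum: psA <= t)
  (hU: exp (exp 1) <= a -> Rabs(psA - /lam * a) <= Gam*phi a)
  (h1: /lam*exp(exp 1) <= t) (h2: /lam + 3*/lam*C <= t) :
  a <= (1+3*C)*(lam*t).
Proof.
  pose proof e_gt2 as He.
  assert (HD2 : 2 <= lam*Gam) by (pose proof (exp_ineq1 (2*exp 1)); lra).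
  assert (HC4 : 4 <= C) by nra.
  set (s := lam*t).
  assert (Hs1 : exp (exp 1) <= s).
  { unfold s. replace (exp (exp 1)) with (lam * (/lam * exp (exp 1))) by (field; lra).
    apply Rmult_le_compat_l; lra. }
  assert (Hs2 : 1 + 3*C <= s).
  { unfold s. replace (1 + 3*C) with (lam * (/lam + 3*/lam*C)) by (field; lra).
    apply Rmult_le_compat_l; lra. }
  destruct (Rle_dec (exp (exp 1)) a) as [Ha|Ha]; [|nra].
  specialize (hU Ha). unfold phi in hU.
  destruct (Rle_dec (exp (exp 1)) a) as [_|]; [|lra].
  set (L := ln (ln a)) in *.
  assert (HL1 := lnln_ge1 a Ha). fold L in HL1.
  pose proof (exp_pos (exp 1)).
  assert (Hlna := ln_exp_ge a Ha).
  set (q := sqrt a). set (r := sqrt L).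
  assert (Hq : q*q = a) by (apply sqrt_sqrt; lra).
  assert (Hr : r*r = L) by (apply sqrt_sqrt; lra).
  assert (Hq0 : 0 <= q) by apply sqrt_pos.
  assert (Hr0 : 0 <= r) by apply sqrt_pos.
  rewrite sqrt_mult_alt in hU by lra. fold q r in hU.
  assert (Hlow : - (Gam*(q*r)) <= psA - /lam*a).
  { pose proof (Rle_abs (-(psA - /lam*a))). rewrite Rabs_Ropp in H0. lra. }
  assert (Ha1 : a <= s + lam*Gam*(q*r)).
  { unfold s. assert (/lam * a <= t + Gam*(q*r)) by lra.
    apply Rmult_le_compat_l with (r:=lam) in H0; [|lra].
    replace (lam * (/lam*a)) with a in H0 by (field; lra). lra. }
  assert (Ha2 : a <= 2*s + C*L).
  { assert (0 <= (q - lam*Gam*r)^2) by apply pow2_ge_0.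
    assert (lam*Gam*(q*r) <= (a + (lam*Gam)^2 * L)/2) by nra.
    assert ((lam*Gam)^2 * L <= C*L) by nra. lra. }
  assert (HLq : L < 2*q).
  { assert (Hq1 : 0 < q) by nra.
    assert (ln a = 2 * ln q) by (rewrite <- Hq, ln_mult by lra; ring).
    pose proof (ln_bound q Hq1). pose proof (ln_bound (ln a)). unfold L. nra. }
  assert (Ha3 : q*q <= 2*s + 2*C*q) by nra.
  destruct (Rle_dec a ((1+3*C)*s)) as [Hok|Hno]; [exact Hok|exfalso].
  assert (Hqb : (1+3*C) < q) by nra.
  assert (2*C*q <= (2/3)*(q*q)) by nra.
  assert (13 * s <= (1+3*C)*s) by nra.
  nra.
Qed.

Lemma sum_ext n f g : (forall i, (i < n)%nat -> f i = g i) -> sum_to n f = sum_to n g.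
Proof. induction n; simpl; intros H; auto. rewrite IHn by (intros; apply H; lia). rewrite H by lia. auto. Qed.

Lemma sum_le n f g : (forall i, (i < n)%nat -> f i <= g i) -> sum_to n f <= sum_to n g.
Proof. induction n; simpl; intros H; [lra|]. pose proof (IHn ltac:(intros; apply H; lia)). pose proof (H n ltac:(lia)). lra. Qed.

Lemma sum_lin n f g c : sum_to n (fun i => f i - c * g i) = sum_to n f - c * sum_to n g.
Proof. induction n; simpl; [ring|]. rewrite IHn; ring. Qed.

Lemma sum_scal n f c : sum_to n (fun i => c * f i) = c * sum_to n f.
Proof. induction n; simpl; [ring|]. rewrite IHn; ring. Qed.

Lemma sum_zero n : sum_to n (fun _ => 0) = 0.
Proof. induction n; simpl; [ring|]. rewrite IHn; ring. Qed.

Lemma sum_add n f g : sum_to n (fun i => f i + g i) = sum_to n f + sum_to n g.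
Proof. induction n; simpl; [ring|]. rewrite IHn; ring. Qed.

Lemma sum_swap n m f : sum_to n (fun i => sum_to m (fun k => f i k)) = sum_to m (fun k => sum_to n (fun i => f i k)).
Proof. induction n; simpl. - symmetry; apply sum_zero.
 - rewrite IHn, <- sum_add. reflexivity. Qed.

Lemma sum_ident J x j : (j < J)%nat -> sum_to J (fun k => ident k j * x k) = x j.
Proof. induction J; intros Hj; [lia|]. simpl.
 destruct (Nat.eq_dec j J) as [->|Hne].
 - rewrite (sum_ext J _ (fun _ => 0)). rewrite sum_zero. unfold ident. rewrite Nat.eqb_refl. ring.
   intros i Hi. unfold ident. destruct (Nat.eqb_spec i J); [lia|]. ring.
 - rewrite IHJ by lia. unfold ident. destruct (Nat.eqb_spec J j); [lia|]. ring. Qed.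

Lemma IPT_lin J P u v c j : I_minus_PT J P (fun i => u i - c * v i) j = I_minus_PT J P u j - c * I_minus_PT J P v j.
Proof. unfold I_minus_PT.
 rewrite (sum_ext J _ (fun k => P k j * u k - c * (P k j * v k))) by (intros; ring).
 rewrite sum_lin. ring. Qed.

Lemma neg_prop J P x : (forall i k, (i < J)%nat -> (k < J)%nat -> 0 <= P i k) ->
  (exists N, forall i k, (i < J)%nat -> (k < J)%nat -> matpow J P N i k = 0) ->
  (forall j, (j < J)%nat -> I_minus_PT J P x j <= 0) -> forall j, (j < J)%nat -> x j <= 0.
Proof.
  intros HP [N HN] Hx.
  assert (Hc : forall n j, (j < J)%nat -> x j <= sum_to J (fun k => matpow J P n k j * x k)).
  { induction n; intros j Hj.
    - simpl. rewrite sum_ident by auto. lra.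
    - pose proof (Hx j Hj) as H1. unfold I_minus_PT in H1.
      apply Rle_trans with (sum_to J (fun l => P l j * sum_to J (fun k => matpow J P n k l * x k))).
      + apply Rle_trans with (sum_to J (fun k => P k j * x k)); [lra|].
        apply sum_le. intros l Hl. apply Rmult_le_compat_l; auto.
      + right. rewrite (sum_ext J _ (fun l => sum_to J (fun k => P l j * matpow J P n k l * x k))).
        2:{ intros l Hl. rewrite <- sum_scal. apply sum_ext. intros; ring. }
        rewrite sum_swap. apply sum_ext. intros k Hk. simpl. unfold matmul.
        rewrite (Rmult_comm _ (x k)), <- sum_scal. apply sum_ext; intros; ring. }
  intros j Hj. apply Rle_trans with (1 := Hc N j Hj).
  rewrite (sum_ext J _ (fun _ => 0)). rewrite sum_zero; lra.
  intros k Hk. rewrite HN by auto. ring.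
Qed.

Lemma max_to_ge n l k : (k < n)%nat -> l k <= max_to n l.
Proof. induction n; intros H; [lia|]. simpl. destruct (Nat.eq_dec k n) as [->|].
 - apply Rmax_r. - eapply Rle_trans; [apply IHn; lia| apply Rmax_l]. Qed.

Theorem mainTheorem8
  (J : nat) (lambda : nat -> R) (Gamma : R) (U : nat -> nat -> R)
  (P : nat -> nat -> R) (lbar : nat -> R) (A : nat -> R -> nat)
  (Abar : nat -> R) (t : R)
  (hlam : forall j, (j < J)%nat -> 0 < lambda j)
  (hGam : forall j, (j < J)%nat -> exp (2 * exp 1) <= lambda j * Gamma)
  (hU : forall j k, (j < J)%nat -> (1 <= k)%nat ->
          Rabs (psum (U j) k - / lambda j * INR k) <= Gamma * phi (INR k))
  (hP01 : forall i k, (i < J)%nat -> (k < J)%nat -> P i k = 0 \/ P i k = 1)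
  (hProw : forall i, (i < J)%nat ->
          sum_to J (fun k => P i k) = 0 \/ sum_to J (fun k => P i k) = 1)
  (hPnil : exists N : nat, forall i k, (i < J)%nat -> (k < J)%nat ->
          matpow J P N i k = 0)
  (hlbar : forall j, (j < J)%nat -> I_minus_PT J P lbar j = lambda j)
  (hA : forall j, (j < J)%nat -> is_arrival_count (U j) t (A j t))
  (hAbar : forall j, (j < J)%nat -> I_minus_PT J P Abar j = INR (A j t))
  (ht : forall j, (j < J)%nat ->
          / lambda j * exp (exp 1) <= t /\
          / lambda j + 3 * / lambda j * (max_to J lambda) ^ 2 * Gamma ^ 2 <= t) :
  forall j, (j < J)%nat ->
    phi (Abar j) <=
      sqrt (2 + 6 * (max_to J lambda) ^ 2 * Gamma ^ 2) * phi (lbar j * t).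
Proof.
  intros j Hj.
  set (c := max_to J lambda) in *.
  set (C := c^2 * Gamma^2).
  set (al := 1 + 3*C).
  pose proof e_gt2 as He. pose proof (exp_pos (exp 1)) as Hee.
  assert (HP : forall i k, (i < J)%nat -> (k < J)%nat -> 0 <= P i k).
  { intros i k Hi Hk. destruct (hP01 i k Hi Hk) as [->| ->]; lra. }
  assert (HGam : 0 < Gamma).
  { pose proof (hGam j Hj). pose proof (hlam j Hj). pose proof (exp_pos (2*exp 1)). nra. }
  assert (Hnode : forall k, (k < J)%nat -> INR (A k t) <= al * (lambda k * t)).
  { intros k Hk. destruct (ht k Hk) as [h1 h2]. destruct (hA k Hk) as [hps _].
    pose proof (hlam k Hk).
    assert (hC : (lambda k * Gamma)^2 <= C).
    { pose proof (max_to_ge J lambda k Hk) as Hm. fold c in Hm. unfold C.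
      assert (0 <= lambda k * Gamma <= c * Gamma) by (split; nra).
      replace (c^2*Gamma^2) with ((c*Gamma)^2) by ring. apply pow_incr; lra. }
    assert (hU' : exp (exp 1) <= INR (A k t) -> Rabs (psum (U k) (A k t) - / lambda k * INR (A k t)) <= Gamma * phi (INR (A k t))).
    { intros Hge. apply hU; auto. destruct (A k t); [simpl in Hge; lra| lia]. }
    assert (h2' : / lambda k + 3 * / lambda k * C <= t).
    { replace (/ lambda k + 3 * / lambda k * C) with
        (/ lambda k + 3 * / lambda k * c ^ 2 * Gamma ^ 2) by (unfold C; ring). exact h2. }
    exact (node_bound (lambda k) Gamma C t (INR (A k t)) (psum (U k) (A k t)) H (hGam k Hk) hC (pos_INR _) hps hU' h1 h2'). }
  assert (Hlb0 : forall k, (k < J)%nat -> 0 <= lbar k).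
  { intros k Hk.
    assert (H := neg_prop J P (fun i => (fun _ => 0) i - 1 * lbar i) HP hPnil).
    assert (0 - 1 * lbar k <= 0); [|lra]. apply H; auto.
    intros i Hi. rewrite IPT_lin, hlbar by auto. unfold I_minus_PT.
    rewrite (sum_ext J _ (fun _ => 0)) by (intros; ring). rewrite sum_zero.
    pose proof (hlam i Hi). lra. }
  assert (Hlbj : lambda j <= lbar j).
  { pose proof (hlbar j Hj). unfold I_minus_PT in H.
    assert (0 <= sum_to J (fun k => P k j * lbar k)).
    { rewrite <- (sum_zero J). apply sum_le. intros i Hi.
      apply Rmult_le_pos; auto. }
    lra. }
  assert (HAb : Abar j <= al * (lbar j * t)).
  { assert (H := neg_prop J P (fun i => Abar i - (al * t) * lbar i) HP hPnil).
    assert (Abar j - (al * t) * lbar j <= 0); [|lra]. apply H; auto.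
    intros i Hi. rewrite IPT_lin, hlbar, hAbar by auto.
    pose proof (Hnode i Hi). lra. }
  set (y := lbar j * t) in *.
  destruct (ht j Hj) as [h1 h2]. pose proof (hlam j Hj) as Hlj.
  assert (Hs : exp (exp 1) <= lambda j * t /\ al <= lambda j * t).
  { split.
    - replace (exp (exp 1)) with (lambda j * (/lambda j * exp (exp 1))) by (field; lra).
      apply Rmult_le_compat_l; lra.
    - unfold al. replace (1 + 3*C) with (lambda j * (/lambda j + 3 * / lambda j * c ^ 2 * Gamma ^ 2))
        by (unfold C; field; lra).
      apply Rmult_le_compat_l; lra. }
  assert (Ht0 : 0 <= t) by (pose proof (exp_pos (exp 1)); nra).
  assert (Hy1 : exp (exp 1) <= y /\ al <= y).
  { unfold y. assert (lambda j * t <= lbar j * t) by (apply Rmult_le_compat_r; lra). lra. }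
  destruct Hy1 as [Hye Hya].
  assert (HC0 : 0 <= C) by (unfold C; nra).
  replace (2 + 6 * c ^ 2 * Gamma ^ 2) with (2 * al) by (unfold al, C; ring).
  assert (Hpy : phi y = sqrt (y * ln (ln y))).
  { unfold phi. destruct (Rle_dec (exp (exp 1)) y); [auto|lra]. }
  pose proof (lnln_ge1 y Hye) as Hly.
  unfold phi at 1. destruct (Rle_dec (exp (exp 1)) (Abar j)) as [Hab|Hab].
  2:{ rewrite Hpy, <- sqrt_mult_alt by (unfold al; lra). rewrite <- sqrt_1.
      apply sqrt_le_1_alt. assert (1 <= al) by (unfold al; lra).
      assert (1 <= al * y) by nra. assert (al*y <= al*y*ln (ln y)) by nra. nra. }
  rewrite Hpy, <- sqrt_mult_alt by (unfold al; lra). apply sqrt_le_1_alt.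
  pose proof (lnln_ge1 _ Hab) as Hla.
  pose proof (ln_exp_ge _ Hab) as Hla'. pose proof (ln_exp_ge _ Hye) as Hly'.
  assert (Hmono : ln (ln (Abar j)) <= ln (ln (y*y))).
  { apply ln_le'; [lra|]. apply ln_le'; [lra|].
    assert (al * y <= y * y) by nra. lra. }
  assert (Hyy : ln (ln (y*y)) <= 2 * ln (ln y)).
  { rewrite ln_mult by lra. replace (ln y + ln y) with (2 * ln y) by ring.
    rewrite ln_mult by lra. pose proof (ln_bound 2 ltac:(lra)). lra. }
  assert (Abar j * ln (ln (Abar j)) <= (al * y) * (2 * ln (ln y))).
  { apply Rmult_le_compat; lra. }
  nra.
Qed.
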